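(* Given $\lambda > 0$, let $L > 0$ be sufficiently large. Let $\eta$ be a Poisson point process in the plane of intensity $1$, and let $R$ be a $\lambda L \times L$ rectangle with sides parallel to the axes such that $$\min\{ x : (x,y) \in R \} \geqslant (\log L)^{2/3}.$$ Then the Voronoi tilings of $R$ induced by $\eta$ and by $\mathbb{H} \cap \eta$ are non-identical with probability at most $1/L^3$.
   Context: $\mathbb{H} = \{(x,y) \in \mathbb{R}^2 : x \geqslant 0\}$. The Voronoi tiling induced by a point set $P$ assigns to each $u \in P$ the cell of points at least as close to $u$ as to any other point of $P$ (for $\mathbb{H}\cap\eta$, cells are taken within $\mathbb{H}$); the tiling of $R$ is its restriction to $R$. *)

(* Defs.v *)
From HB Require Import structures.
From mathcomp Require Import all_boot all_order all_algebra.
From mathcomp Require Import all_classical all_reals all_analysis.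
Set Implicit Arguments. Unset Strict Implicit. Unset Printing Implicit Defensive.
Import Order.TTheory GRing.Theory Num.Theory.
Local Open Scope classical_set_scope.
Local Open Scope ring_scope.

Definition area {R : realType} : set (R * R) -> \bar R :=
  (@lebesgue_measure R \x @lebesgue_measure R)%E.

Definition bounded2 {R : realType} (A : set (R * R)) : Prop :=
  exists M : R, forall p, A p -> `|p.1| <= M /\ `|p.2| <= M.

Definition has_card {T : eqType} (S : set T) (k : nat) : Prop :=
  exists s : seq T, [/\ uniq s, size s = k & forall p, S p <-> p \in s].

Definition poisson_p {R : realType} (a : R) (k : nat) : R :=
  expR (- a) * a ^+ k / (k`!)%:R.

(* eta : Omega -> set of points is a Poisson point process of intensity 1 on
   the plane, w.r.t. the probability P: for every finite family of pairwise
   disjoint bounded Borel sets A_i and counts k_i, the event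
   "#(eta ∩ A_i) = k_i for all i" is measurable and has probability
   prod_i e^{-|A_i|} |A_i|^{k_i} / k_i!  (i.e. Poisson counts with mean the
   area, independent on disjoint sets). *)
Definition poisson_pp {R : realType} {d : measure_display} {T : measurableType d}
  (P : probability T R) (eta : T -> set (R * R)) : Prop :=
  forall (n : nat) (A : 'I_n -> set (R * R)) (k : 'I_n -> nat),
    (forall i, measurable (A i)) -> (forall i, bounded2 (A i)) ->
    (forall i j, i != j -> A i `&` A j = set0) ->
    let E := [set w | forall i, has_card (eta w `&` A i) (k i)] in
    measurable E /\
    P E = (\prod_(i < n) poisson_p (fine (area (A i))) (k i))%:E.

Definition sqdist {R : realType} (p q : R * R) : R :=
  (p.1 - q.1) ^+ 2 + (p.2 - q.2) ^+ 2.

Definition vcell {R : realType} (D Q : set (R * R)) (u : R * R) : set (R * R) :=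
  [set z | D z /\ forall v, Q v -> sqdist z u <= sqdist z v].

Definition vtiling {R : realType} (D Q Rg : set (R * R)) : set (set (R * R)) :=
  [set C | exists u, Q u /\ C = vcell D Q u `&` Rg /\ C !=set0].

Definition halfplane {R : realType} : set (R * R) := [set p | 0 <= p.1].

Definition rect {R : realType} (a b w h : R) : set (R * R) :=
  [set p | a <= p.1 <= a + w /\ b <= p.2 <= b + h].

(* Main.v *)
Require Import Defs.
From HB Require Import structures.
From mathcomp Require Import all_boot all_order all_algebra.
From mathcomp Require Import all_classical all_reals all_analysis.
From mathcomp Require Import lra ring.
Import Order.TTheory GRing.Theory Num.Theory.
Local Open Scope classical_set_scope.
Local Open Scope ring_scope.

Lemma sqdist_gt {R : realType} (z v : R * R) : 0 < z.1 -> v.1 < 0 -> z.1 ^+ 2 < sqdist z v.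
Proof.
move=> hz hv; rewrite /sqdist.
have h1 : z.1 ^+ 2 < (z.1 - v.1) ^+ 2.
  rewrite ltr_pXn2r // ?nnegrE; try lra.
have := sqr_ge0 (z.2 - v.2); lra.
Qed.

Lemma tiling_eq {R : realType} (Q Rg : set (R * R)) :
  (forall z, Rg z -> 0 < z.1 /\ exists u, Q u /\ 0 <= u.1 /\ sqdist z u < z.1 ^+ 2) ->
  vtiling setT Q Rg = vtiling halfplane (halfplane `&` Q) Rg.
Proof.
move=> H.
have cellE : forall u, 0 <= u.1 -> Q u -> vcell setT Q u `&` Rg = vcell halfplane (halfplane `&` Q) u `&` Rg.
  move=> u hu Qu; apply/seteqP; split => z [[_ Hc] Rz]; split => //.
  - split; first by rewrite /halfplane /=; have := (H z Rz).1; lra.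
    by move=> v [_ Qv]; apply: Hc.
  - split => // v Qv.
    have [hv|hv] := leP 0 v.1; first by apply: Hc; split.
    have [hz [u' [Qu' [hu' du']]]] := H z Rz.
    have := Hc u' (conj hu' Qu'); have := sqdist_gt _ _ hz hv; lra.
apply/seteqP; split => C [u [Qu [CE Cn]]].
- have [hu|hu] := leP 0 u.1.
    by exists u; split; [split|rewrite -cellE].
  exfalso; case: Cn => z; rewrite CE => -[[_ Hc] Rz].
  have [hz [u' [Qu' [hu' du']]]] := H z Rz.
  have := Hc u' Qu'; have := sqdist_gt _ _ hz hu; lra.
- case: Qu => hu Qu; exists u; split => //; split => //.
  by rewrite CE cellE.
Qed.
Definition sq {R : realType} (x y s : R) : set (R * R) := `[x, x + s] `*` `[y, y + s].

Lemma sq_meas {R : realType} (x y s : R) : measurable (sq x y s).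
Proof. by apply: measurableX. Qed.

Lemma itv_len {R : realType} (z s : R) : 0 < s -> lebesgue_measure (`[z, z + s] : set R) = s%:E.
Proof.
move=> s0; have := @lebesgue_measure_itv R `[z, z + s]%R; rewrite /= !lte_fin ltrDl s0 => ->.
by rewrite -EFinD; congr (_%:E); lra.
Qed.

Lemma sq_area {R : realType} (x y s : R) : 0 < s -> area (sq x y s) = (s * s)%:E.
Proof.
move=> s0; rewrite /area /sq product_measure1E //.
transitivity (s%:E * s%:E)%E; last by [].
by congr (_ * _)%E; apply: itv_len.
Qed.

Lemma sq_bounded {R : realType} (x y s : R) : bounded2 (sq x y s).
Proof.
exists (`|x| + `|y| + `|s|) => p [/=]; rewrite !in_itv /= => /andP[h1 h2] /andP[h3 h4].
have := ler_norm x; have := ler_norm y; have := ler_norm s.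
move=> n4 n5 n6.
have := normr_ge0 x; have := normr_ge0 y; have := normr_ge0 s => n7 n8 n9.
have n10 : - `|x| <= x by rewrite lerNl; have := ler_norm (- x); rewrite normrN.
have n11 : - `|y| <= y by rewrite lerNl; have := ler_norm (- y); rewrite normrN.
have n12 : - `|s| <= s by rewrite lerNl; have := ler_norm (- s); rewrite normrN.
split; rewrite ler_norml; apply/andP; split; lra.
Qed.

Lemma has_card0 {T : eqType} (S : set T) : has_card S 0 <-> S = set0.
Proof.
split.
- case=> s [_ /size0nil -> h]; apply/seteqP; split => p // /h.
  by rewrite in_nil.
- move=> ->; exists [::]; split => // p; rewrite in_nil; split => //.
Qed.

Lemma empty_prob {R : realType} {d : measure_display} {T : measurableType d}
  (P : probability T R) (eta : T -> set (R * R)) (A : set (R * R)) :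
  poisson_pp P eta -> measurable A -> bounded2 A ->
  measurable [set w | eta w `&` A = set0] /\
  P [set w | eta w `&` A = set0] = (expR (- fine (area A)))%:E.
Proof.
move=> hP mA bA.
have [] := hP 1%N (fun _ => A) (fun _ => 0%N) (fun _ => mA) (fun _ => bA).
  by move=> i j; rewrite !ord1 eqxx.
have -> : [set w | forall i : 'I_1, has_card (eta w `&` A) 0] = [set w | eta w `&` A = set0].
  apply/seteqP; split => w /=.
  - by move=> /(_ ord0) /has_card0.
  - by move=> h i; apply/has_card0.
move=> hm ->; split => //.
by rewrite big_ord1 /poisson_p expr0 mulr1 divr1.
Qed.
Lemma powR_facts {R : realType} (t : R) : 0 <= t ->
  t `^ (2 / 3) = (t `^ (1/3)) ^+ 2 /\ (t `^ (1/3)) ^+ 3 = t.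
Proof.
move=> t0; split.
- by rewrite -powR_mulrn ?powR_ge0 // -powRrM; congr (_ `^ _); lra.
- by rewrite -powR_mulrn ?powR_ge0 // -powRrM -[RHS]powRr1 //; congr (_ `^ _); lra.
Qed.

Lemma c_ge {R : realType} (t : R) : 24 ^+ 3 <= t -> 24 <= t `^ (1/3).
Proof.
move=> ht.
have p0 : (0 : R) <= 24 ^+ 3 by apply: exprn_ge0.
have t0 : 0 <= t by lra.
have [_ h3] := @powR_facts _ t t0.
have c0 := powR_ge0 t (1/3).
move: h3 c0; set c := t `^ (1/3) => h3 c0.
rewrite leNgt; apply/negP => hc.
have : c ^+ 3 < 24 ^+ 3 by rewrite ltrXn2r.
rewrite h3; lra.
Qed.
Lemma numeric {R : realType} (lam L a : R) : 0 < lam ->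
  Num.max (expR (24 ^+ 3)) (2 * (lam + 1)) <= L -> (ln L) `^ (2 / 3) <= a ->
  [/\ 1 <= a / 2, 2 * (a / 2 * (a / 2)) < a ^+ 2 &
   ((Num.truncn (lam * L / (a / 2))).+1 * (Num.truncn (L / (a / 2))).+1)%:R
     * expR (- (a / 2 * (a / 2))) <= L ^- 3].
Proof.
move=> lam0; rewrite ge_max => /andP[hL1 hL2] ha.
have p0 : (0 : R) <= 24 ^+ 3 by apply: exprn_ge0.
have e1 : 1 <= expR (24 ^+ 3 : R) by have := expR_ge1Dx (24 ^+ 3 : R); lra.
have L0 : 0 < L by lra.
set t := ln L.
have ht : 24 ^+ 3 <= t.
  rewrite /t -[X in X <= _](expRK (24 ^+ 3 : R)) ler_ln //.
  by rewrite posrE expR_gt0.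
have t0 : 0 <= t by lra.
have [h2 h3] := @powR_facts _ t t0.
have c24 := c_ge _ ht.
move: h2 h3 c24; set c := t `^ (1/3) => h2 h3 c24.
rewrite h2 in ha.
have ha2 : 24 * t <= a ^+ 2.
  have : c ^+ 4 <= a ^+ 2.
    have -> : c ^+ 4 = (c ^+ 2) ^+ 2 by rewrite -exprM.
    rewrite ler_pXn2r // ?nnegrE ?sqr_ge0 //.
    have := sqr_ge0 c; lra.
  have -> : c ^+ 4 = c * c ^+ 3 by rewrite exprS.
  rewrite h3 => h4.
  have : 24 * t <= c * t by rewrite ler_pM2r //; lra.
  lra.
have a576 : 24 * 24 <= a.
  have : 24 * 24 <= c ^+ 2 by rewrite expr2; apply: ler_pM => //; lra.
  lra.
set s := a / 2.
have hs : s * s = a ^+ 2 / 4 by rewrite /s expr2; field.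
have s1 : 1 <= s by rewrite /s; lra.
split => //; first by rewrite hs; lra.
have hX : expR (- (s * s)) <= (L ^+ 6)^-1.
  have -> : (L ^+ 6)^-1 = expR (- (6%:R * t)).
    by rewrite expRN expRM_natl /t lnK // posrE.
  rewrite ler_expR; rewrite hs; lra.
have hm : ((Num.truncn (lam * L / s)).+1)%:R <= lam * L + 1.
  rewrite -natr1; have := Num.Theory.truncn_le (lam * L / s).
  have lL0 : 0 <= lam * L by apply: mulr_ge0; lra.
  have q0 : 0 <= lam * L / s by apply: divr_ge0; lra.
  rewrite q0 => hq.
  have : lam * L / s <= lam * L.
    rewrite ler_pdivrMr; last lra.
    have := ler_wpM2l lL0 s1; rewrite mulr1; lra.
  lra.
have hn : ((Num.truncn (L / s)).+1)%:R <= L + 1.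
  rewrite -natr1; have := Num.Theory.truncn_le (L / s).
  have q0 : 0 <= L / s by apply: divr_ge0; lra.
  rewrite q0 => hq.
  have : L / s <= L.
    rewrite ler_pdivrMr; last lra.
    have := ler_wpM2l (ltW L0) s1; rewrite mulr1; lra.
  lra.
have hmn : ((Num.truncn (lam * L / s)).+1 * (Num.truncn (L / s)).+1)%:R <= L ^+ 3.
  rewrite natrM.
  apply: (le_trans (ler_pM _ _ hm hn)) => //.
  rewrite !exprS expr0 mulr1.
  have L1 : 1 <= L by lra.
  have h1 : lam * L + 1 <= (lam + 1) * L.
    have := ler_wpM2l (ltW lam0) L1; rewrite mulr1 mulrDl mul1r; lra.
  have h2' : L + 1 <= 2 * L by lra.
  apply: (le_trans (ler_pM _ _ h1 h2')).
  - by apply: addr_ge0; [apply: mulr_ge0|]; lra.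
  - lra.
  have -> : (lam + 1) * L * (2 * L) = (2 * (lam + 1)) * (L * L) by ring.
  apply: ler_wpM2r; [apply: mulr_ge0|]; lra.
apply: (le_trans (ler_pM _ _ hmn hX)) => //.

rewrite -exprVn.
have -> : (6 = 3 + 3)%N by [].
rewrite exprD exprVn mulrA mulfV ?mul1r //.
by rewrite expf_neq0 // gt_eqF.
Qed.

Lemma cell_index {R : realType} (s c w0 zc : R) : 0 < s -> 0 <= w0 -> c <= zc <= c + w0 ->
  exists i : nat, (i < (Num.truncn (w0 / s)).+1)%N /\ c + i%:R * s <= zc <= c + i%:R * s + s.
Proof.
move=> s0 w00 /andP[h1 h2].
set q := (zc - c) / s.
have q0 : 0 <= q by apply: divr_ge0; lra.
have hq : zc = c + q * s by rewrite /q; field; rewrite gt_eqF.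
have [hi1 hi2] := andP (Num.Theory.truncn_itv q0).
exists (Num.truncn q); split.
- rewrite ltnS Num.Theory.truncn_ge_nat ?divr_ge0 ?(ltW s0) //.
  apply: (le_trans hi1); rewrite /q ler_pM2r ?invr_gt0 //; lra.
- have e1 := ler_wpM2r (ltW s0) hi1.
  have e2 := ler_wpM2r (ltW s0) (ltW hi2).
  rewrite -natr1 mulrDl mul1r in e2.
  apply/andP; split; lra.
Qed.

Theorem lemma3p8 (R : realType) (lam : R) : 0 < lam ->
  exists L0 : R, forall L : R, L0 <= L ->
  forall (d : measure_display) (T : measurableType d) (P : probability T R)
         (eta : T -> set (R * R)),
  poisson_pp P eta ->
  forall a b : R, (ln L) `^ (2 / 3) <= a ->
  exists E : set T, [/\ measurable E,
    [set w | vtiling setT (eta w) (rect a b (lam * L) L)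
             <> vtiling halfplane (halfplane `&` eta w) (rect a b (lam * L) L)]
      `<=` E
    & (P E <= (L ^- 3)%:E)%E].
Proof.
move=> lam0; exists (Num.max (expR (24 ^+ 3)) (2 * (lam + 1))) => L hL d T P eta hP a b ha.
have [s1 s2 hnum] := numeric _ _ _ lam0 hL ha.
move: s1 s2 hnum; set s := a / 2 => s1 s2 hnum.
have s0 : 0 < s by lra.
have a0 : 0 < a by rewrite /s in s1; lra.
have L0 : 0 < L.
  move: hL; rewrite ge_max => /andP[h _]; have := expR_gt0 (24 ^+ 3 : R); lra.
set m := (Num.truncn (lam * L / s)).+1.
set n := (Num.truncn (L / s)).+1.
pose S (k : nat) := sq (a + (k %/ n)%:R * s) (b + (k %% n)%:R * s) s.
pose F (k : nat) := [set w | eta w `&` S k = set0].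
have hF k : measurable (F k) /\ P (F k) = (expR (- (s * s)))%:E.
  have [h1 h2] := empty_prob P eta (S k) hP (sq_meas _ _ _) (sq_bounded _ _ _).
  by split => //; rewrite h2 sq_area.
have hEm : measurable (\big[setU/set0]_(k < m * n) F k).
  by apply: bigsetU_measurable => k _; exact: (hF k).1.
exists (\big[setU/set0]_(k < m * n) F k); split.
- exact: hEm.
- move=> w /= hw; apply: contrapT => hnot; apply: hw; apply: tiling_eq => z [hz1 hz2].
  have lL0 : 0 <= lam * L by apply: mulr_ge0; lra.
  have [i [hi hzi]] := cell_index _ _ _ _ s0 lL0 hz1.
  have [j [hj hzj]] := cell_index _ _ _ _ s0 (ltW L0) hz2.
  have hk : (i * n + j < m * n)%N.
    have : (i * n + j < i * n + n)%N by rewrite ltn_add2l.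
    move=> h; apply: (leq_trans h); by rewrite -mulSnr leq_mul2r hi orbT.
  have n0 : (0 < n)%N by [].
  have ediv : ((i * n + j) %/ n = i)%N by rewrite divnMDl // divn_small // addn0.
  have emod : ((i * n + j) %% n = j)%N by rewrite modnMDl modn_small.
  have /set0P [u [hu1 hu2]] : eta w `&` S (i * n + j)%N != set0.
    apply/eqP => e; apply: hnot; rewrite -bigcup_mkord; exists (i * n + j)%N => //.
  move: hu2; rewrite /S ediv emod /sq => -[] /=; rewrite !in_itv /= => /andP[u1 u2] /andP[u3 u4].
  case/andP: hzi => z1 z2; case/andP: hzj => z3 z4.
  have az : a <= z.1 by have := mulr_ge0 (ler0n R i) (ltW s0); lra.
  split; first lra.
  exists u; split => //; split; first by have := mulr_ge0 (ler0n R i) (ltW s0); lra.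
  have sq_le : forall e : R, - s <= e <= s -> e ^+ 2 <= s * s.
    move=> e /andP[e1 e2].
    have h1 : 0 <= s - e by lra.
    have h2 : 0 <= s + e by lra.
    have := mulr_ge0 h1 h2; rewrite expr2; nra.
  have d1 : (z.1 - u.1) ^+ 2 <= s * s by apply: sq_le; apply/andP; split; lra.
  have d2 : (z.2 - u.2) ^+ 2 <= s * s by apply: sq_le; apply/andP; split; lra.
  have za : a ^+ 2 <= z.1 ^+ 2 by rewrite ler_pXn2r // ?nnegrE; lra.
  rewrite /sqdist; lra.
- have sub := @content_subadditive _ _ _ P (\big[setU/set0]_(k < m * n) F k) F (m * n)%N.
  have := sub (fun k _ => (hF k).1) hEm (fun x h => h).
  move/le_trans; apply.
  rewrite (eq_bigr (fun _ => (expR (- (s * s)))%:E)); last by move=> k _; exact: (hF k).2.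
  rewrite sumEFin lee_fin sumr_const card_ord -mulr_natl.
  exact: hnum.
Qed.
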